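(* Let $M, N \in \mathbb{N}$, let $y_1,\dots,y_N \in \mathbb{R}^2$ be sample points, and let $x_0, x_1, \dots, x_M \in \mathbb{R}^2$ be the successive robot positions produced by the single-agent exploration algorithm described in the context. Define weights recursively by $n_0(y_j) = \frac{1}{N}$ for all $j$. For $i = 1,\dots,M$, let $(\pi^\star_{ij})_{j=1}^N$ be an optimal solution, and $\tilde W(i)$ the optimal value, of $$\min_{\pi_{i1},\dots,\pi_{iN}} \sum_{j=1}^N \pi_{ij}\|x_i - y_j\| \quad\text{s.t.}\quad \pi_{ij} \ge 0,\ \sum_{j=1}^N \pi_{ij} = \frac{1}{M},\ \pi_{ij} \le \min\!\left(n_{i-1}(y_j), \tfrac{1}{M}\right)\ \forall j,$$ and set $n_i(y_j) = n_{i-1}(y_j) - \pi^\star_{ij}$. For $0 \le t \le M$, let $\mu_t$ be the discrete measure that assigns mass $\frac{1}{M}$ to each of $x_1,\dots,x_t$ and an additional mass $\frac{M-t}{M}$ to $x_t$ (for $t=0$, $\mu_0$ is the unit mass at $x_0$). Let $\nu$ assign mass $\frac{1}{N}$ to each $y_j$. Let $W(t)$ be the optimal value of the transportation linear program $$\min_{\gamma \ge 0} \sum_{a,j} \gamma_{aj}\|p_a - y_j\| \quad \text{s.t.}\quad \sum_j \gamma_{aj} = \mu_t(p_a)\ \forall a,\quad \sum_a \gamma_{aj} = \frac{1}{N}\ \forall j,$$ where $p_a$ ranges over the atoms of $\mu_t$ and $\mu_t(p_a)$ is the mass of $\mu_t$ at $p_a$ (i.e. the Wasserstein-1 distance between $\mu_t$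 and $\nu$). Then for every $0 \le t \le M$, $$W(t) \le \sum_{i=1}^{t} \tilde W(i) + \sum_{j=1}^N n_t(y_j)\,\|x_t - y_j\|.$$
   Context: $\|\cdot\|$ is the Euclidean norm. Single-agent exploration algorithm: a robot starts at $x_0$ and has an energy budget of $M$ discrete time steps. At each step $t$, it picks a goal point among sample points with positive weight $n_t(y_j)$, using a receding-horizon cost. The next position $x_{t+1}$ is then whatever point an arbitrary given motion controller reaches when steering toward that goal, so $x_{t+1}$ may differ from the goal. After moving, the weights are updated by $n_{t+1}(y_j) = n_t(y_j) - \pi^\star_{(t+1)j}$, where $\pi^\star_{(t+1)j}$ solves the linear program stated in the claim. Standing assumption (Assumption 1 of the paper): at time $t$, each past robot point $x_1,\dots,x_t$ carries mass $\frac{1}{M}$. The not-yet-determined future robot points $x_{t+1},\dots,x_M$ are all regarded as located at the current position $x_t$, carrying total mass $\frac{M-t}{M}$. This is what the measure $\mu_t$ encodes. *)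

(* Defs.v *)
From HB Require Import structures.
From mathcomp Require Import all_boot all_order all_algebra.
From mathcomp Require Import classical_sets reals.
Set Implicit Arguments. Unset Strict Implicit. Unset Printing Implicit Defensive.
Import Order.TTheory GRing.Theory Num.Theory.
Local Open Scope ring_scope.
Local Open Scope classical_set_scope.

Section Defs.
Variable R : realType.

Definition pt2 := 'rV[R]_2.

Definition edist (p q : pt2) : R :=
  Num.sqrt (\sum_(k < 2) (p 0 k - q 0 k) ^+ 2).

Variables (M N : nat).

Definition step_cost (y : 'I_N -> pt2) (xi : pt2) (p : 'I_N -> R) : R :=
  \sum_(j < N) p j * edist xi (y j).

Definition step_feasible (nprev : 'I_N -> R) (p : 'I_N -> R) : Prop :=
  [/\ (forall j, 0 <= p j),
      \sum_(j < N) p j = 1 / M%:R &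
      (forall j, p j <= Num.min (nprev j) (1 / M%:R))].

Definition step_optimal (y : 'I_N -> pt2) (nprev : 'I_N -> R) (xi : pt2)
    (p : 'I_N -> R) : Prop :=
  step_feasible nprev p /\
  (forall q, step_feasible nprev q -> step_cost y xi p <= step_cost y xi q).

Fixpoint weight (pi : nat -> 'I_N -> R) (i : nat) (j : 'I_N) : R :=
  match i with
  | 0 => 1 / N%:R
  | i'.+1 => weight pi i' j - pi i'.+1 j
  end.

Definition atoms (x : nat -> pt2) (t : nat) : seq pt2 :=
  undup (x t :: [seq x i | i <- iota 1 t]).

Definition mass (x : nat -> pt2) (t : nat) (p : pt2) : R :=
  (count (fun i => x i == p) (iota 1 t))%:R / M%:R
  + (if p == x t then (M%:R - t%:R) / M%:R else 0).

Definition W (x : nat -> pt2) (y : 'I_N -> pt2) (t : nat) : R :=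
  let A := atoms x t in
  inf [set c | exists g : 'I_(size A) -> 'I_N -> R,
     [/\ (forall a j, 0 <= g a j),
         (forall a, \sum_(j < N) g a j = mass x t (nth 0 A a)),
         (forall j, \sum_(a < size A) g a j = 1 / N%:R) &
         c = \sum_(a < size A) \sum_(j < N) g a j * edist (nth 0 A a) (y j)]].

End Defs.

(* Main.v *)
Require Import Defs.
From HB Require Import structures.
From mathcomp Require Import all_boot all_order all_algebra.
From mathcomp Require Import classical_sets reals.
Import Order.TTheory GRing.Theory Num.Theory.
From mathcomp Require Import ring lra.
Local Open Scope ring_scope.

Lemma sum_ind (R : realType) (A : seq (pt2 R)) p (c : R) : uniq A -> p \in A ->
  \sum_(a < size A) (if nth 0 A a == p then c else 0) = c.
Proof.
move=> uA pA.
have -> : \sum_(a < size A) (if nth 0 A a == p then c else 0)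
  = \sum_(q <- A) (if q == p then c else 0) by rewrite (big_nth 0) big_mkord.
rewrite -big_mkcond /= big_const_seq.
have -> : count (fun q => q == p) A = 1%N.
  by have := count_uniq_mem p uA; rewrite pA.
by rewrite /= addr0.
Qed.

Lemma sum_if (R : realType) (N : nat) (b : bool) (f : 'I_N -> R) :
  \sum_(j < N) (if b then f j else 0) = if b then \sum_(j < N) f j else 0.
Proof. by case: b => //; rewrite big1. Qed.

Lemma weight_tele (R : realType) (N : nat) (pi : nat -> 'I_N -> R) t j :
  \sum_(1 <= i < t.+1) pi i j + weight pi t j = 1 / N%:R.
Proof.
elim: t => [|t IH]; first by rewrite big_geq // add0r.
rewrite big_nat_recr //= -IH; ring.
Qed.

Theorem theorem1 (R : realType) (M N : nat) (hM : (0 < M)%N) (hN : (0 < N)%N)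
    (y : 'I_N -> pt2 R) (x : nat -> pt2 R) (pi : nat -> 'I_N -> R)
    (hpi : forall i, (1 <= i <= M)%N ->
       step_optimal M y (weight pi i.-1) (x i) (pi i)) :
  forall t, (t <= M)%N ->
    W M x y t <=
      \sum_(1 <= i < t.+1) step_cost y (x i) (pi i)
      + \sum_(j < N) weight pi t j * edist (x t) (y j).
Proof.
move=> t ht.
have M0 : M%:R != 0 :> R by rewrite pnatr_eq0 -lt0n.
have N0 : N%:R != 0 :> R by rewrite pnatr_eq0 -lt0n.
have wge0 : forall i, (i <= M)%N -> forall j, 0 <= weight pi i j.
  elim=> [|i IH] hi j /=; first by rewrite divr_ge0 // ler0n.
  have [[_ _ H] _] := hpi i.+1 hi.
  have := H j; rewrite le_min => /andP[H1 _].
  by rewrite subr_ge0.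
have wsum : forall i, (i <= M)%N -> \sum_(j < N) weight pi i j = 1 - i%:R / M%:R.
  elim=> [|i IH] hi /=.
    by rewrite sumr_const card_ord -[_ *+ N]mulr_natr !mul1r mul0r subr0 mulVf.
  have [[_ H _] _] := hpi i.+1 hi.
  rewrite sumrB IH ?(ltnW hi) //= H -natr1; field.
  by rewrite M0.
have hps : forall i, (1 <= i <= t)%N -> \sum_(j < N) pi i j = 1 / M%:R.
  move=> i /andP[h1 h2].
  have hi : (1 <= i <= M)%N by rewrite h1 (leq_trans h2 ht).
  have [[_ H _] _] := hpi i hi.
  exact H.
have hp0 : forall i, (1 <= i <= t)%N -> forall j, 0 <= pi i j.
  move=> i /andP[h1 h2].
  have hi : (1 <= i <= M)%N by rewrite h1 (leq_trans h2 ht).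
  have [[H _ _] _] := hpi i hi.
  exact H.
set A := atoms x t.
have uA : uniq A by apply: undup_uniq.
have xtA : x t \in A by rewrite mem_undup in_cons eqxx.
have xiA : forall i, (1 <= i <= t)%N -> x i \in A.
  move=> i hi; rewrite mem_undup in_cons; apply/orP; right.
  by apply: map_f; rewrite mem_iota addnC addn1 ltnS.
pose g : 'I_(size A) -> 'I_N -> R := fun a j =>
  \sum_(1 <= i < t.+1) (if nth 0 A a == x i then pi i j else 0)
  + (if nth 0 A a == x t then weight pi t j else 0).
rewrite /W -/A.
apply: ge_inf.
  exists 0 => c [g' [H0 _ _ ->]].
  apply: sumr_ge0 => a _; apply: sumr_ge0 => j _.
  by apply: mulr_ge0 => //; apply: sqrtr_ge0.
exists g; split.
- move=> a j; apply: addr_ge0.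
    rewrite big_nat_cond; apply: sumr_ge0 => i /andP[/andP[h1 h2] _].
    by case: ifP => // _; apply: hp0; rewrite h1 -ltnS h2.
  by case: ifP => // _; apply: wge0.
- move=> a; rewrite /g big_split /= exchange_big /= sum_if.
  rewrite /mass.
  have ct : (count (fun i => x i == A`_a) (iota 1 t))%:R
     = \sum_(1 <= i < t.+1 | x i == A`_a) (1:R).
    by rewrite -sum1_count natr_sum /index_iota subSS subn0.
  rewrite ct mulr_suml.
  congr (_ + _).
    rewrite [RHS]big_mkcond /=; apply: eq_big_nat => i hi; rewrite eq_sym; case: ifP => _.
      by rewrite hps ?mul1r //; rewrite ltnS in hi.
    by rewrite big1.
  case: ifP => // _; rewrite wsum //; field; by rewrite M0.
- move=> j; rewrite /g big_split /= exchange_big /= sum_ind //.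
  rewrite (eq_big_nat _ _ (F2 := fun i => pi i j)); first by rewrite weight_tele.
  move=> i hi; apply: sum_ind => //; apply: xiA; by rewrite ltnS in hi.
- rewrite /g.
  rewrite [RHS](eq_bigr (fun a : 'I_(size A) =>
     \sum_(j<N) ((\sum_(1<=i<t.+1) (if A`_a == x i then pi i j else 0)) * edist A`_a (y j))
     + \sum_(j<N) ((if A`_a == x t then weight pi t j else 0) * edist A`_a (y j)))); last first.
    by move=> a _; rewrite -big_split; apply: eq_bigr => j _; rewrite mulrDl.
  rewrite [RHS]big_split /=.
  congr (_ + _).
    rewrite [RHS](eq_bigr (fun a : 'I_(size A) => \sum_(1<=i<t.+1) \sum_(j<N)
        (if A`_a == x i then pi i j * edist (x i) (y j) else 0))); last first.
      move=> a _; rewrite exchange_big /=; apply: eq_bigr => j _.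
      rewrite mulr_suml; apply: eq_bigr => i _.
      by case: eqP => [->|_]; rewrite ?mul0r.
    rewrite [RHS]exchange_big /=; apply: eq_big_nat => i hi.
    rewrite exchange_big /=; apply: eq_bigr => j _.
    by rewrite sum_ind //; apply: xiA; rewrite ltnS in hi.
  rewrite [RHS](eq_bigr (fun a : 'I_(size A) => if A`_a == x t then
       \sum_(j<N) weight pi t j * edist (x t) (y j) else 0)).
    by rewrite sum_ind.
  move=> a _; case: eqP => [->|_]; last by rewrite big1 // => j _; rewrite mul0r.
  by [].
Qed.
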